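(* Let $M\ge1$ and let $\mathcal B\subset[0,1]$ be finite, $b_0=\max\mathcal B$. Let $$\Pi=\Big\{\pi\in[0,1]^{\{0,\dots,M-1\}\times\mathcal B\times\mathcal B}:\ \pi((m,b),b')=0\ \forall b'>b,\ \ \sum_{b'\le b}\pi((m,b),b')=1\ \forall m,b\Big\}.$$ For $\pi\in\Pi$ define $q(\pi)=\bm q\in[0,1]^{M\times\mathcal B}$ by $q_1(b)=\pi((0,b_0),b)$ and $q_{m+1}(b)=\sum_{b'\in\mathcal B}q_m(b')\pi((m,b'),b)$ for $m\in[M-1]$, $b\in\mathcal B$. Let $\mathcal Q_\Pi=\{q(\pi):\pi\in\Pi\}$ and $$\mathcal Q=\Big\{\bm q\in[0,1]^{M\times\mathcal B}:\ \sum_{b\in\mathcal B}q_m(b)=1\ \forall m\in[M],\ \ \sum_{b\le b'}q_{m+1}(b)\ge\sum_{b\le b'}q_m(b)\ \forall b'\in\mathcal B,\ m\in[M-1]\Big\}.$$ Then $\mathcal Q_\Pi=\mathcal Q$.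
   Context: A policy $\pi$ describes random generation of a non-increasing bid vector: $b_1$ is drawn from $\pi((0,b_0),\cdot)$ and $b_{m+1}$ from $\pi((m,b_m),\cdot)$; $q(\pi)_m(b)$ is then the marginal probability that $b_m=b$. *)

(* Defs.v *)
From mathcomp Require Import all_boot all_order all_algebra.
From mathcomp Require Import reals.
Set Implicit Arguments. Unset Strict Implicit. Unset Printing Implicit Defensive.
Import Order.TTheory GRing.Theory Num.Theory.
Local Open Scope ring_scope.

(* The bid set B is a duplicate-free sequence of reals in [0,1].
   A policy is pi : nat -> R -> R -> R, pi m b b' standing for pi((m,b),b');
   only its values for m < M and b, b' in B matter.
   A marginal vector is q : nat -> R -> R, q m b standing for q_m(b), with
   m ranging over 1..M and b over B. *)

Section Defs.
Variable R : realType.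

Definition in_Pi (M : nat) (B : seq R) (pi : nat -> R -> R -> R) : Prop :=
  (forall m b b', (m < M)%N -> b \in B -> b' \in B -> 0 <= pi m b b' <= 1) /\
  (forall m b b', (m < M)%N -> b \in B -> b' \in B -> b < b' -> pi m b b' = 0) /\
  (forall m b, (m < M)%N -> b \in B -> \sum_(b' <- B | b' <= b) pi m b b' = 1).

(* q(pi): q_1(b) = pi((0,b0),b), q_{m+1}(b) = sum_{b'} q_m(b') pi((m,b'),b).
   (index 0 is unused and set to 0) *)
Fixpoint q_of (B : seq R) (b0 : R) (pi : nat -> R -> R -> R) (m : nat) (b : R) : R :=
  match m with
  | 0 => 0
  | 1 => pi 0%N b0 b
  | m'.+1 => \sum_(b' <- B) q_of B b0 pi m' b' * pi m' b' b
  end.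

Definition in_Q (M : nat) (B : seq R) (q : nat -> R -> R) : Prop :=
  (forall m b, (1 <= m <= M)%N -> b \in B -> 0 <= q m b <= 1) /\
  (forall m, (1 <= m <= M)%N -> \sum_(b <- B) q m b = 1) /\
  (forall m b', (1 <= m)%N -> (m < M)%N -> b' \in B ->
     \sum_(b <- B | b <= b') q m.+1 b >= \sum_(b <- B | b <= b') q m b).

Definition in_QPi (M : nat) (B : seq R) (b0 : R) (q : nat -> R -> R) : Prop :=
  exists pi, in_Pi M B pi /\
    forall m b, (1 <= m <= M)%N -> b \in B -> q m b = q_of B b0 pi m b.

End Defs.

(* Main.v *)
Require Import Defs.
From mathcomp Require Import all_boot all_order all_algebra.
From mathcomp Require Import reals.
From mathcomp Require Import lra ring.
Import Order.TTheory GRing.Theory Num.Theory.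
Local Open Scope ring_scope.

Section Help.

Variable R : realType.
Implicit Types (w h : R -> R) (s B : seq R).

Lemma tele_sorted s : sorted <%R s -> forall h w,
  \sum_(b <- s) (h (\sum_(c <- s | c <= b) w c) - h (\sum_(c <- s | c < b) w c))
  = h (\sum_(c <- s) w c) - h 0.
Proof.
elim: s => [|x s IH] /=; first by move=> _ h w; rewrite !big_nil subrr.
move=> px h w.
have sS := path_sorted px.
have /allP xs := order_path_min lt_trans px.
have z1 : \sum_(c <- s | c <= x) w c = 0.
  by apply: big1_seq => c /andP[cx cs]; have := xs c cs; rewrite ltNge cx.
have z2 : \sum_(c <- s | c < x) w c = 0.
  by apply: big1_seq => c /andP[cx cs]; have := xs c cs; rewrite ltNge (ltW cx).
rewrite big_cons. rewrite !big_cons lexx ltxx z1 z2 addr0.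
rewrite (eq_big_seq (fun b => h (w x + \sum_(c <- s | c <= b) w c)
   - h (w x + \sum_(c <- s | c < b) w c))); last first.
  move=> b bs; have xb := xs b bs.
  by rewrite !big_cons (ltW xb) xb.
rewrite (IH sS (fun t => h (w x + t)) w) addr0.
by rewrite addrC addrA subrK.
Qed.

Lemma tele B : uniq B -> forall h w,
  \sum_(b <- B) (h (\sum_(c <- B | c <= b) w c) - h (\sum_(c <- B | c < b) w c))
  = h (\sum_(c <- B) w c) - h 0.
Proof.
move=> uB h w.
have pB : perm_eq (sort <=%R B) B by rewrite perm_sort.
have sS : sorted <%R (sort <=%R B) by rewrite sort_lt_sorted.
have E : forall (P : pred R) (F : R -> R),
  \sum_(c <- B | P c) F c = \sum_(c <- sort <=%R B | P c) F c.
  by move=> P F; rewrite (perm_big _ pB).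
rewrite E (eq_bigr (fun b => h (\sum_(c <- sort <=%R B | c <= b) w c)
  - h (\sum_(c <- sort <=%R B | c < b) w c))); last by move=> b _; rewrite !E.
rewrite E.
exact: tele_sorted.
Qed.

Lemma sum_le_lt B w y : uniq B -> y \in B ->
  \sum_(c <- B | c <= y) w c = \sum_(c <- B | c < y) w c + w y.
Proof.
move=> uB yB.
rewrite (big_mkcond (fun c => c <= y)) (bigD1_seq y) //= lexx addrC.
congr (_ + _); rewrite [RHS]big_mkcond [LHS]big_mkcond /=.
apply: eq_bigr => c _.
by rewrite lt_neqAle; case: (c != y).
Qed.

Lemma term_le_sum B w b : uniq B -> b \in B -> (forall c, c \in B -> 0 <= w c) ->
  w b <= \sum_(c <- B) w c.
Proof.
move=> uB bB w0; rewrite (bigD1_seq b) //= lerDl big_seq_cond.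
by apply: sumr_ge0 => c /andP[cB _]; apply: w0.
Qed.

Lemma sum_sub B w (P Q : pred R) : (forall c, c \in B -> 0 <= w c) ->
  (forall c, c \in B -> P c -> Q c) ->
  \sum_(c <- B | P c) w c <= \sum_(c <- B | Q c) w c.
Proof.
move=> w0 PQ; rewrite (big_mkcond P) (big_mkcond Q) big_seq [X in _ <= X]big_seq.
apply: ler_sum => c cB; case: ifP => Pc; first by rewrite (PQ c cB Pc).
by case: ifP => // _; apply: w0.
Qed.

Lemma sum_ge0 B w (P : pred R) : (forall c, c \in B -> 0 <= w c) ->
  0 <= \sum_(c <- B | P c) w c.
Proof.
by move=> w0; rewrite big_seq_cond; apply: sumr_ge0 => c /andP[cB _]; apply: w0.
Qed.

Lemma sum_delta B b : uniq B -> b \in B ->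
  \sum_(b' <- B | b' <= b) ((b == b')%:R : R) = 1.
Proof.
move=> uB bB; rewrite big_mkcond (bigD1_seq b) //= lexx eqxx big1 ?addr0 //.
by move=> c cb; rewrite eq_sym (negbTE cb); case: ifP.
Qed.

Definition ov (a1 a2 b1 b2 : R) :=
  Num.min a2 b2 - Num.min a1 b2 - Num.min a2 b1 + Num.min a1 b1.

Lemma ov_bounds a1 a2 b1 b2 : a1 <= a2 -> b1 <= b2 ->
  0 <= ov a1 a2 b1 b2 <= a2 - a1.
Proof.
move=> h1 h2; rewrite /ov !minEle.
case: (leP a2 b2) => ?; case: (leP a1 b2) => ?; case: (leP a2 b1) => ?; case: (leP a1 b1) => ?; apply/andP; split; lra.
Qed.

Lemma ov_zero a1 a2 b1 b2 : a1 <= a2 -> a2 <= b1 -> b1 <= b2 ->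
  ov a1 a2 b1 b2 = 0.
Proof.
move=> h1 h2 h3; rewrite /ov !minEle.
case: (leP a2 b2) => ?; case: (leP a1 b2) => ?; case: (leP a2 b1) => ?; case: (leP a1 b1) => ?; lra.
Qed.

Lemma eq_sum_in B (P : pred R) (F1 F2 : R -> R) :
  (forall c, c \in B -> F1 c = F2 c) ->
  \sum_(c <- B | P c) F1 c = \sum_(c <- B | P c) F2 c.
Proof.
move=> E; rewrite big_seq_cond [RHS]big_seq_cond.
by apply: eq_bigr => c /andP[cB _]; apply: E.
Qed.

Definition cdf B (f : R -> R) (b : R) := \sum_(c <- B | c <= b) f c.
Definition cdfs B (f : R -> R) (b : R) := \sum_(c <- B | c < b) f c.
Definition ovm B (q : nat -> R -> R) m b b' :=
  ov (cdfs B (q m) b) (cdf B (q m) b) (cdfs B (q m.+1) b') (cdf B (q m.+1) b').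
Definition mkpi B (b0 : R) (q : nat -> R -> R) (m : nat) (b b' : R) : R :=
  if m == 0%N then (if b == b0 then q 1%N b' else ((b == b')%:R))
  else if q m b == 0 then (b == b')%:R else ovm B q m b b' / q m b.

Lemma tele1 B w (a : R) : uniq B ->
  \sum_(b <- B) (Num.min a (cdf B w b) - Num.min a (cdfs B w b))
  = Num.min a (\sum_(c <- B) w c) - Num.min a 0.
Proof. by move=> uB; rewrite /cdf /cdfs; have := tele B uB (fun t => Num.min a t) w; rewrite /= => ->. Qed.

Lemma tele2 B w (a : R) : uniq B ->
  \sum_(b <- B) (Num.min (cdf B w b) a - Num.min (cdfs B w b) a)
  = Num.min (\sum_(c <- B) w c) a - Num.min 0 a.
Proof. by move=> uB; rewrite /cdf /cdfs; have := tele B uB (fun t => Num.min t a) w; rewrite /= => ->. Qed.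
End Help.
Arguments cdf {R}. Arguments cdfs {R}. Arguments ovm {R}. Arguments mkpi {R}. Arguments ov {R}.

Theorem lemma1 (R : realType) (M : nat) (B : seq R) (b0 : R)
  (hM : (1 <= M)%N) (huniq : uniq B)
  (hB01 : forall b, b \in B -> 0 <= b <= 1)
  (hb0 : b0 \in B) (hb0max : forall b, b \in B -> b <= b0) :
  forall q : nat -> R -> R, in_QPi M B b0 q <-> in_Q M B q.
Proof.
move=> q; split.
- move=> [pi [[p01 [pz psum]] agree]].
  have S : forall m b, (m < M)%N -> b \in B -> \sum_(b' <- B) pi m b b' = 1.
    move=> m b mM bB; rewrite (bigID (fun b' => b' <= b)) /= psum //.
    rewrite big1_seq ?addr0 // => c /andP[nc cB]; apply: pz => //.
    by rewrite ltNge.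
  have qofS : forall m b, (0 < m)%N -> q_of B b0 pi m.+1 b =
      \sum_(b' <- B) q_of B b0 pi m b' * pi m b' b by case.
  have Qpos : forall m, (1 <= m <= M)%N ->
      (forall b, b \in B -> 0 <= q_of B b0 pi m b) /\
      \sum_(b <- B) q_of B b0 pi m b = 1.
    elim => [|m IH] // /andP[m1 mM].
    case: m IH m1 mM => [|m] IH _ mM.
      split => [b bB|] /=; last exact: S.
      by have /andP[] := p01 0%N b0 b hM hb0 bB.
    have [IH1 IH2] := IH (ltnW mM).
    split.
      move=> b bB; rewrite qofS //; apply: sum_ge0 => c cB.
      by apply: mulr_ge0; [exact: IH1 | have /andP[] := p01 m.+1 c b mM cB bB].
    rewrite (eq_bigr _ (fun b _ => qofS m.+1 b isT)) exchange_big /= -IH2.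
    by apply: eq_big_seq => c cB; rewrite -mulr_sumr S ?mulr1.
  split; [|split].
  + move=> m b mM bB; rewrite agree //; have [h1 h2] := Qpos m mM.
    apply/andP; split; first exact: h1.
    by rewrite -h2; apply: term_le_sum.
  + by move=> m mM; rewrite -(Qpos m mM).2; apply: eq_big_seq => b bB; apply: agree.
  + move=> m b' m1 mM b'B.
    have mM' : (1 <= m <= M)%N by rewrite m1 ltnW.
    have mM'' : (1 <= m.+1 <= M)%N by rewrite mM.
    rewrite (@eq_sum_in R B _ (q m) (fun b => q_of B b0 pi m b)); last by move=> b bB; apply: agree.
    rewrite (@eq_sum_in R B _ (q m.+1) (fun b => q_of B b0 pi m.+1 b)); last by move=> b bB; apply: agree.
    rewrite (eq_bigr _ (fun b _ => qofS m b m1)) exchange_big /=.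
    rewrite (big_mkcond (fun c => c <= b')) big_seq [X in _ <= X]big_seq.
    apply: ler_sum => c cB; rewrite -mulr_sumr.
    have Q0 := (Qpos m mM').1 c cB.
    case: ifP => cb.
      rewrite -[X in X <= _]mulr1; apply: ler_wpM2l => //.
      rewrite -(psum m c) //; apply: sum_sub => [x xB|x xB xc].
        by have /andP[] := p01 m c x mM cB xB.
      exact: le_trans xc cb.
    apply: mulr_ge0 => //; apply: sum_ge0 => x xB.
    by have /andP[] := p01 m c x mM cB xB.
- move=> [q01 [qsum qdom]].
  have q0 : forall m b, (1 <= m <= M)%N -> b \in B -> 0 <= q m b.
    by move=> m b mM bB; have /andP[] := q01 m b mM bB.
  have Fd : forall m b, b \in B -> cdf B (q m) b = cdfs B (q m) b + q m b.
    by move=> m b bB; rewrite /cdf /cdfs sum_le_lt.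
  have Fs0 : forall m b, (1 <= m <= M)%N -> 0 <= cdfs B (q m) b.
    by move=> m b mM; apply: sum_ge0 => c cB; apply: q0.
  have F1 : forall m b, (1 <= m <= M)%N -> cdf B (q m) b <= 1.
    move=> m b mM; rewrite -(qsum m mM) /cdf.
    by apply: (@sum_sub R B (q m) _ xpredT) => // c cB; apply: q0.
  have ovb : forall m b b', (1 <= m)%N -> (m < M)%N -> b \in B -> b' \in B ->
      0 <= ovm B q m b b' <= q m b.
    move=> m b b' m1 mM bB b'B.
    have mM' : (1 <= m <= M)%N by rewrite m1 ltnW.
    have mM'' : (1 <= m.+1 <= M)%N by rewrite mM.
    have := @ov_bounds R (cdfs B (q m) b) (cdf B (q m) b)
       (cdfs B (q m.+1) b') (cdf B (q m.+1) b').
    rewrite /ovm !Fd // addrC addrK; apply.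
      by have := q0 m b mM' bB; lra.
    by have := q0 m.+1 b' mM'' b'B; lra.
  have ovz : forall m b b', (1 <= m)%N -> (m < M)%N -> b \in B -> b' \in B ->
      b < b' -> ovm B q m b b' = 0.
    move=> m b b' m1 mM bB b'B bb'.
    have mM' : (1 <= m <= M)%N by rewrite m1 ltnW.
    have mM'' : (1 <= m.+1 <= M)%N by rewrite mM.
    apply: ov_zero.
    - by rewrite Fd // lerDl q0.
    - apply: (le_trans (qdom m b m1 mM bB)).
      apply: sum_sub => [c cB|c cB cb]; first exact: q0.
      exact: le_lt_trans cb bb'.
    - by rewrite Fd // lerDl q0.
  have rows : forall m b, (1 <= m)%N -> (m < M)%N -> b \in B ->
      \sum_(b' <- B) ovm B q m b b' = q m b.
    move=> m b m1 mM bB.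
    have mM' : (1 <= m <= M)%N by rewrite m1 ltnW.
    have mM'' : (1 <= m.+1 <= M)%N by rewrite mM.
    rewrite (eq_bigr (fun b' =>
       (Num.min (cdf B (q m) b) (cdf B (q m.+1) b') - Num.min (cdf B (q m) b) (cdfs B (q m.+1) b'))
     - (Num.min (cdfs B (q m) b) (cdf B (q m.+1) b') - Num.min (cdfs B (q m) b) (cdfs B (q m.+1) b'))));
      last by move=> b' _; rewrite /ovm /ov; ring.
    rewrite sumrB !tele1 // qsum //.
    have h1 := F1 m b mM'; have h2 := Fs0 m b mM'.
    have h3 : cdfs B (q m) b <= 1 by apply: le_trans h1; rewrite Fd // lerDl q0.
    have h4 : 0 <= cdf B (q m) b by apply: le_trans h2 _; rewrite Fd // lerDl q0.
    rewrite (min_l h1) (min_r h4) (min_l h3) (min_r h2) Fd //; ring.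
  have cols : forall m b', (1 <= m)%N -> (m < M)%N -> b' \in B ->
      \sum_(b <- B) ovm B q m b b' = q m.+1 b'.
    move=> m b' m1 mM b'B.
    have mM' : (1 <= m <= M)%N by rewrite m1 ltnW.
    have mM'' : (1 <= m.+1 <= M)%N by rewrite mM.
    rewrite (eq_bigr (fun b =>
       (Num.min (cdf B (q m) b) (cdf B (q m.+1) b') - Num.min (cdfs B (q m) b) (cdf B (q m.+1) b'))
     - (Num.min (cdf B (q m) b) (cdfs B (q m.+1) b') - Num.min (cdfs B (q m) b) (cdfs B (q m.+1) b'))));
      last by move=> b _; rewrite /ovm /ov; ring.
    rewrite sumrB !tele2 // qsum //.
    have h1 := F1 m.+1 b' mM''; have h2 := Fs0 m.+1 b' mM''.
    have h3 : cdfs B (q m.+1) b' <= 1 by apply: le_trans h1; rewrite Fd // lerDl q0.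
    have h4 : 0 <= cdf B (q m.+1) b' by apply: le_trans h2 _; rewrite Fd // lerDl q0.
    rewrite (min_r h1) (min_l h4) (min_r h3) (min_l h2) Fd //; ring.
  have qB1 : (1 <= 1 <= M)%N by rewrite hM.
  exists (mkpi B b0 q); split; [split; [|split]|].
  + move=> [|m] b b' mM bB b'B; rewrite /mkpi /=.
      case: eqP => _; first exact: q01.
      by case: eqP => _; rewrite ?lexx ?ler01.
    case: eqP => qz; first by case: eqP => _; rewrite ?lexx ?ler01.
    have /andP[o1 o2] := ovb m.+1 b b' isT mM bB b'B.
    have qp : 0 < q m.+1 b.
      rewrite lt_def; apply/andP; split; first by apply/eqP.
      by apply: q0 bB; exact: ltnW.
    by rewrite divr_ge0 ?(ltW qp) //= ler_pdivrMr // mul1r.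
  + move=> [|m] b b' mM bB b'B bb'; rewrite /mkpi /=.
      case: eqP => [eb|_]; last by rewrite lt_eqF.
      by have := hb0max b' b'B; rewrite -eb leNgt bb'.
    case: eqP => qz; first by rewrite lt_eqF.
    by rewrite ovz // mul0r.
  + move=> [|m] b mM bB; rewrite /mkpi /=.
      case: eqP => [eb|_]; last exact: sum_delta.
      rewrite -(qsum 1%N qB1) big_mkcond; apply: eq_big_seq => c cB.
      by rewrite eb hb0max.
    case: eqP => qz; first exact: sum_delta.
    rewrite big_mkcond (eq_big_seq (fun b' => ovm B q m.+1 b b' / q m.+1 b)).
      by rewrite -mulr_suml rows // divff //; apply/eqP.
    move=> c cB; case: leP => // bc.
    by rewrite ovz // mul0r.
  + elim => [|m IH] // b /andP[m1 mM] bB.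
    case: m IH m1 mM => [|m] IH _ mM.
      by rewrite /= /mkpi /= eqxx.
    have -> : q_of B b0 (mkpi B b0 q) m.+2 b = \sum_(b' <- B) q_of B b0 (mkpi B b0 q) m.+1 b' * mkpi B b0 q m.+1 b' b by [].
    rewrite (eq_big_seq (fun b' => ovm B q m.+1 b' b)); first by rewrite cols.
    move=> c cB; rewrite -(IH c) //; last by apply/andP; split => //; exact: ltnW.
    rewrite /mkpi /=; case: eqP => qz.
      rewrite qz mul0r; apply/eqP; rewrite eq_le.
      by have := ovb m.+1 c b isT mM cB bB; rewrite qz andbC.
    by rewrite mulrC divfK //; apply/eqP.
Qed.
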